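(* There exists a unique $k[[x]]$-algebra homomorphism $$\varphi: k[[y_0,y_1,y_2]]/(y_1^2-y_0y_2)\longrightarrow k[[x_0,x_1]]$$ which is grading preserving (i.e. $\varphi(y_p)$ is homogeneous of degree $p$ for $p=0,1,2$) and Poisson. It is given by $$y_0\mapsto x_0,\qquad y_1\mapsto -x_0x_1,\qquad y_2\mapsto x_0x_1^2.$$
   Context: $k$ is a field of characteristic zero. $A=k[[y_0,y_1,y_2]]/(y_1^2-y_0y_2)$ is the inverse limit $\varprojlim_n\mathcal P(\mathcal O_n)$ of the graded Poisson algebras of principal symbols of differential operators on $\mathcal O_n=k[x]/(x^{n+1})$; it is graded by $\deg y_p=p$ with Poisson bracket determined by $\{y_0,y_1\}=y_0$, $\{y_0,y_2\}=2y_1$, $\{y_1,y_2\}=y_2$. $B=k[[x_0,x_1]]$ is the completion at $(x_0,x_1)$ of the algebra $k[x_0,x_1]$ of principal symbols of differential operators on $k[x]$ ($x_0$ the symbol of $x$, $x_1$ the symbol of $\frac d{dx}$), graded by $\deg x_0=0$, $\deg x_1=1$ (degree in $x_1$), with Poisson bracket determined by $\{x_0,x_1\}=-1$. Both are $k[[x]]$-algebras via $x\mapsto y_0$ and $x\mapsto x_0$ respectively. ''Poisson'' means $\varphi$ preserves the brackets. *)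

(* Defs.v *)
(* Formal power series are represented by their coefficient
   functions; all operations are the usual (finite) formulas on coefficients. *)
From mathcomp Require Import all_boot all_order all_algebra.
Set Implicit Arguments. Unset Strict Implicit. Unset Printing Implicit Defensive.
Import Order.TTheory GRing.Theory Num.Theory.
Local Open Scope ring_scope.

Section PowerSeries.
Variable k : fieldType.

(* k[[x]] : coefficient of x^a *)
Definition PS1 := nat -> k.
(* k[[y0,y1,y2]] : coefficient of y0^a y1^b y2^c *)
Definition PS3 := nat -> nat -> nat -> k.
(* k[[x0,x1]] : coefficient of x0^a x1^b *)
Definition PS2 := nat -> nat -> k.

Definition add3 (f g : PS3) : PS3 := fun a b c => f a b c + g a b c.
Definition opp3 (f : PS3) : PS3 := fun a b c => - f a b c.
Definition zero3 : PS3 := fun _ _ _ => 0.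
Definition mono3 (i j l : nat) : PS3 :=
  fun a b c => if [&& a == i, b == j & c == l] then 1 else 0.
Definition one3 : PS3 := mono3 0 0 0.
Definition mul3 (f g : PS3) : PS3 := fun a b c =>
  \sum_(i < a.+1) \sum_(j < b.+1) \sum_(l < c.+1)
     f i j l * g (a - i)%N (b - j)%N (c - l)%N.
Definition y0 : PS3 := mono3 1 0 0.
Definition y1 : PS3 := mono3 0 1 0.
Definition y2 : PS3 := mono3 0 0 1.
Definition d3_0 (f : PS3) : PS3 := fun a b c => (a.+1)%:R * f a.+1 b c.
Definition d3_1 (f : PS3) : PS3 := fun a b c => (b.+1)%:R * f a b.+1 c.
Definition d3_2 (f : PS3) : PS3 := fun a b c => (c.+1)%:R * f a b c.+1.
Definition jac3 (D E : PS3 -> PS3) (f g : PS3) : PS3 :=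
  add3 (mul3 (D f) (E g)) (opp3 (mul3 (E f) (D g))).
(* Poisson bracket on k[[y0,y1,y2]] determined by
   {y0,y1} = y0, {y0,y2} = 2 y1, {y1,y2} = y2 (Leibniz rule in each argument):
   {f,g} = sum_{i<j} {y_i,y_j} (d_i f d_j g - d_j f d_i g). *)
Definition bracketA (f g : PS3) : PS3 :=
  add3 (mul3 y0 (jac3 d3_0 d3_1 f g))
  (add3 (mul3 (add3 y1 y1) (jac3 d3_0 d3_2 f g))
        (mul3 y2 (jac3 d3_1 d3_2 f g))).
Definition relA : PS3 := add3 (mul3 y1 y1) (opp3 (mul3 y0 y2)).
(* structure map k[[x]] -> A, x |-> y0 *)
Definition iotaA (h : PS1) : PS3 :=
  fun a b c => if (b == 0%N) && (c == 0%N) then h a else 0.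

Definition add2 (f g : PS2) : PS2 := fun a b => f a b + g a b.
Definition opp2 (f : PS2) : PS2 := fun a b => - f a b.
Definition mono2 (i j : nat) : PS2 :=
  fun a b => if (a == i) && (b == j) then 1 else 0.
Definition one2 : PS2 := mono2 0 0.
Definition mul2 (f g : PS2) : PS2 := fun a b =>
  \sum_(i < a.+1) \sum_(j < b.+1) f i j * g (a - i)%N (b - j)%N.
Definition x0 : PS2 := mono2 1 0.
Definition x1 : PS2 := mono2 0 1.
Definition d2_0 (f : PS2) : PS2 := fun a b => (a.+1)%:R * f a.+1 b.
Definition d2_1 (f : PS2) : PS2 := fun a b => (b.+1)%:R * f a b.+1.
(* Poisson bracket on k[[x0,x1]] determined by {x0,x1} = -1:
   {f,g} = - (d_0 f d_1 g - d_1 f d_0 g). *)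
Definition bracketB (f g : PS2) : PS2 :=
  opp2 (add2 (mul2 (d2_0 f) (d2_1 g)) (opp2 (mul2 (d2_1 f) (d2_0 g)))).
(* structure map k[[x]] -> B, x |-> x0 *)
Definition iotaB (h : PS1) : PS2 := fun a b => if b == 0%N then h a else 0.
(* homogeneous of degree p for the grading deg x0 = 0, deg x1 = 1 *)
Definition homogB (p : nat) (f : PS2) : Prop :=
  forall a b : nat, b != p -> f a b = 0.

(* A k[[x]]-algebra homomorphism A = k[[y0,y1,y2]]/(y1^2 - y0 y2) -> B,
   represented (universal property of the quotient) by a k[[x]]-algebra
   homomorphism phi : k[[y0,y1,y2]] -> B that kills y1^2 - y0 y2. *)
Definition kx_alg_hom_A_B (phi : PS3 -> PS2) : Prop :=
  [/\ forall f g, phi (add3 f g) = add2 (phi f) (phi g),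
      forall f g, phi (mul3 f g) = mul2 (phi f) (phi g),
      phi one3 = one2,
      forall h, phi (iotaA h) = iotaB h
    & phi relA = (fun _ _ => 0)].

Definition grading_preserving (phi : PS3 -> PS2) : Prop :=
  [/\ homogB 0 (phi y0), homogB 1 (phi y1) & homogB 2 (phi y2)].

Definition poisson_hom (phi : PS3 -> PS2) : Prop :=
  forall f g, phi (bracketA f g) = bracketB (phi f) (phi g).

(* two such maps are equal as maps on A iff they agree on all of k[[y]] *)
Definition good_phi (phi : PS3 -> PS2) : Prop :=
  [/\ kx_alg_hom_A_B phi, grading_preserving phi & poisson_hom phi].

End PowerSeries.

(* Main.v *)
Require Import Defs.
From mathcomp Require Import all_boot all_order all_algebra.
From mathcomp Require Import ring zify.
From Stdlib Require Import FunctionalExtensionality.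
Set Implicit Arguments. Unset Strict Implicit. Unset Printing Implicit Defensive.
Import GRing.Theory.
Local Open Scope ring_scope.

Module Part1.
Section S.
Variable k : fieldType.
Local Notation S2 := {poly {poly k}}.
Local Notation S3 := {poly {poly {poly k}}}.

Definition X0 : S2 := 'X.
Definition X1 : S2 := ('X)%:P.
Definition c1 : S2 := - (X0 * X1).
Definition c2 : S2 := X0 * (X1 * X1).
Definition F2 : {rmorphism k -> S2} := (polyC \o polyC).
Lemma cF2 : commr_rmorph F2 c2. Proof. by move=> x; exact: mulrC. Qed.
Definition h2 : {rmorphism {poly k} -> S2} := horner_morph cF2.
Lemma ch2 : commr_rmorph h2 c1. Proof. by move=> x; exact: mulrC. Qed.
Definition h1 : {rmorphism {poly {poly k}} -> S2} := horner_morph ch2.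
Lemma ch1 : commr_rmorph h1 X0. Proof. by move=> x; exact: mulrC. Qed.
Definition Phi : {rmorphism S3 -> S2} := horner_morph ch1.

Definition Y0 : S3 := 'X.
Definition Y1 : S3 := ('X)%:P.
Definition Y2 : S3 := ('X)%:P%:P.
Lemma h2C c : h2 c%:P = c%:P%:P. Proof. exact: horner_morphC. Qed.
Lemma h2X : h2 'X = c2. Proof. exact: horner_morphX. Qed.
Lemma h1C p : h1 p%:P = h2 p. Proof. exact: horner_morphC. Qed.
Lemma h1X : h1 'X = c1. Proof. exact: horner_morphX. Qed.
Lemma PhiCC p : Phi p%:P = h1 p. Proof. exact: horner_morphC. Qed.
Lemma Phi0 : Phi Y0 = X0. Proof. exact: horner_morphX. Qed.
Lemma Phi1 : Phi Y1 = c1. Proof. by rewrite PhiCC h1X. Qed.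
Lemma Phi2 : Phi Y2 = c2. Proof. by rewrite PhiCC h1C h2X. Qed.
Lemma PhiC c : Phi c%:P%:P%:P = c%:P%:P. Proof. by rewrite PhiCC h1C h2C. Qed.


Definition isder (R : nzRingType) (d : R -> R) :=
  (forall x y, d (x + y) = d x + d y) /\ (forall x y, d (x * y) = d x * y + x * d y).

Lemma der0 (R : nzRingType) (d : R -> R) : isder d -> d 0 = 0.
Proof.
case=> dD _; have h := dD 0 0; rewrite addr0 in h.
by apply: (addrI (d 0)); rewrite addr0 -h.
Qed.

Lemma map_der (R : nzRingType) (d : R -> R) : isder d -> isder (map_poly d).
Proof.
move=> hd; have d0 := der0 hd; case: hd => dD dM; split => p q; apply/polyP => i.
  by rewrite coefD !coef_map_id0 // coefD dD.
rewrite coef_map_id0 // coefD !coefM (big_morph d dD d0) -big_split /=.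
by apply: eq_bigr => j _; rewrite dM !coef_map_id0.
Qed.

Lemma deriv_der (R : nzRingType) : isder (@deriv R).
Proof. by split => p q; [rewrite derivD | rewrite derivM]. Qed.

Lemma map_derC (R : nzRingType) (d : R -> R) c : d 0 = 0 -> map_poly d c%:P = (d c)%:P.
Proof. by move=> d0; apply/polyP=> i; rewrite coef_map_id0 // !coefC; case: eqP. Qed.

Lemma map_derX (R : nzRingType) (d : R -> R) : d 0 = 0 -> d 1 = 0 -> map_poly d 'X = 0.
Proof. by move=> d0 d1; apply/polyP=> i; rewrite coef_map_id0 // coefX coef0; case: eqP. Qed.

Definition D0 : S3 -> S3 := @deriv _.
Definition D1 : S3 -> S3 := map_poly (@deriv _).
Definition D2 : S3 -> S3 := map_poly (map_poly (@deriv _)).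
Definition E0 : S2 -> S2 := @deriv _.
Definition E1 : S2 -> S2 := map_poly (@deriv _).

Lemma D0d : isder D0. Proof. exact: deriv_der. Qed.
Lemma D1d : isder D1. Proof. exact/map_der/deriv_der. Qed.
Lemma D2d : isder D2. Proof. exact/map_der/map_der/deriv_der. Qed.
Lemma E0d : isder E0. Proof. exact: deriv_der. Qed.
Lemma E1d : isder E1. Proof. exact/map_der/deriv_der. Qed.

Lemma derC0 (R : nzRingType) : (@deriv R) 1 = 0. Proof. by rewrite derivC. Qed.

Lemma D0_Y0 : D0 Y0 = 1. Proof. exact: derivX. Qed.
Lemma D0_Y1 : D0 Y1 = 0. Proof. exact: derivC. Qed.
Lemma D0_Y2 : D0 Y2 = 0. Proof. exact: derivC. Qed.
Lemma D1_Y0 : D1 Y0 = 0. Proof. by apply: map_derX; rewrite ?deriv0 ?derivC. Qed.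
Lemma D1_Y1 : D1 Y1 = 1. Proof. by rewrite /D1 /Y1 map_derC ?deriv0 // derivX. Qed.
Lemma D1_Y2 : D1 Y2 = 0. Proof. by rewrite /D1 /Y2 map_derC ?deriv0 // derivC. Qed.
Lemma md0 : map_poly (@deriv k) 0 = 0. Proof. exact: (der0 (map_der (@deriv_der _))). Qed.
Lemma D2_Y0 : D2 Y0 = 0.
Proof. apply: map_derX; first exact: md0. by rewrite (map_derC _ (deriv0 _)) derivC. Qed.
Lemma D2_Y1 : D2 Y1 = 0.
Proof. rewrite /D2 /Y1 (map_derC _ md0) map_derX ?deriv0 ?derivC //; exact: polyC0. Qed.
Lemma D2_Y2 : D2 Y2 = 1.
Proof. rewrite /D2 /Y2 (map_derC _ md0) (map_derC _ (deriv0 _)) derivX !polyC1; reflexivity. Qed.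
Lemma D0_C c : D0 c%:P%:P%:P = 0. Proof. exact: derivC. Qed.
Lemma D1_C c : D1 c%:P%:P%:P = 0. Proof. by rewrite /D1 map_derC ?deriv0 // derivC. Qed.
Lemma D2_C c : D2 c%:P%:P%:P = 0.
Proof. rewrite /D2 (map_derC _ md0) (map_derC _ (deriv0 _)) derivC !polyC0; reflexivity. Qed.
Lemma E0_X0 : E0 X0 = 1. Proof. exact: derivX. Qed.
Lemma E0_X1 : E0 X1 = 0. Proof. exact: derivC. Qed.
Lemma E1_X0 : E1 X0 = 0. Proof. by apply: map_derX; rewrite ?deriv0 ?derivC. Qed.
Lemma E1_X1 : E1 X1 = 1. Proof. by rewrite /E1 /X1 map_derC ?deriv0 // derivX. Qed.
Lemma E0_C c : E0 c%:P%:P = 0. Proof. exact: derivC. Qed.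
Lemma E1_C c : E1 c%:P%:P = 0. Proof. by rewrite /E1 map_derC ?deriv0 // derivC. Qed.

Lemma derN (R : nzRingType) (d : R -> R) x : isder d -> d (- x) = - d x.
Proof.
move=> hd; have d0 := der0 hd; case: hd => dD _.
by apply: (addrI (d x)); rewrite -dD !subrr d0.
Qed.

Lemma S3_ind (K : S3 -> Prop) :
  (forall c, K c%:P%:P%:P) -> (forall P Q, K P -> K Q -> K (P + Q)) ->
  (forall P Q, K P -> K Q -> K (P * Q)) -> K Y0 -> K Y1 -> K Y2 -> forall P, K P.
Proof.
move=> KC KD KM K0 K1 K2.
have KK2 : forall R : {poly k}, K R%:P%:P.
  elim/poly_ind => [|R c IH]; first by have := KC 0; rewrite !polyC0.
  by rewrite !rmorphD !rmorphM /=; apply: KD; [apply: KM | apply: KC].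
have KK1 : forall Q : {poly {poly k}}, K Q%:P.
  elim/poly_ind => [|Q R IH]; first by have := KK2 0; rewrite !polyC0.
  by rewrite !rmorphD !rmorphM /=; apply: KD; [apply: KM | apply: KK2].
elim/poly_ind => [|P Q IH]; first by have := KK1 0; rewrite !polyC0.
by apply: KD; [apply: KM | apply: KK1].
Qed.

Definition BrA (P Q : S3) : S3 :=
  Y0 * (D0 P * D1 Q - D1 P * D0 Q) + ((Y1 + Y1) * (D0 P * D2 Q - D2 P * D0 Q)
  + Y2 * (D1 P * D2 Q - D2 P * D1 Q)).
Definition BrB (F G : S2) : S2 := - (E0 F * E1 G - E1 F * E0 G).

Lemma BrA_addl P1 P2 Q : BrA (P1 + P2) Q = BrA P1 Q + BrA P2 Q.
Proof. rewrite /BrA D0d.1 D1d.1 D2d.1; ring. Qed.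
Lemma BrA_addr P Q1 Q2 : BrA P (Q1 + Q2) = BrA P Q1 + BrA P Q2.
Proof. rewrite /BrA D0d.1 D1d.1 D2d.1; ring. Qed.
Lemma BrA_mull P1 P2 Q : BrA (P1 * P2) Q = P1 * BrA P2 Q + P2 * BrA P1 Q.
Proof. rewrite /BrA D0d.2 D1d.2 D2d.2; ring. Qed.
Lemma BrA_mulr P Q1 Q2 : BrA P (Q1 * Q2) = Q1 * BrA P Q2 + Q2 * BrA P Q1.
Proof. rewrite /BrA D0d.2 D1d.2 D2d.2; ring. Qed.
Lemma BrB_addl F1 F2 G : BrB (F1 + F2) G = BrB F1 G + BrB F2 G.
Proof. rewrite /BrB E0d.1 E1d.1; ring. Qed.
Lemma BrB_addr F G1 G2 : BrB F (G1 + G2) = BrB F G1 + BrB F G2.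
Proof. rewrite /BrB E0d.1 E1d.1; ring. Qed.
Lemma BrB_mull F1 F2 G : BrB (F1 * F2) G = F1 * BrB F2 G + F2 * BrB F1 G.
Proof. rewrite /BrB E0d.2 E1d.2; ring. Qed.
Lemma BrB_mulr F G1 G2 : BrB F (G1 * G2) = G1 * BrB F G2 + G2 * BrB F G1.
Proof. rewrite /BrB E0d.2 E1d.2; ring. Qed.
Lemma BrA_Cl c Q : BrA c%:P%:P%:P Q = 0.
Proof. rewrite /BrA D0_C D1_C D2_C; ring. Qed.
Lemma BrA_Cr c P : BrA P c%:P%:P%:P = 0.
Proof. rewrite /BrA D0_C D1_C D2_C; ring. Qed.
Lemma BrB_Cl c G : BrB c%:P%:P G = 0.
Proof. rewrite /BrB E0_C E1_C; ring. Qed.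
Lemma BrB_Cr c F : BrB F c%:P%:P = 0.
Proof. rewrite /BrB E0_C E1_C; ring. Qed.

Lemma E0_c1 : E0 c1 = - X1.
Proof. rewrite /c1 (derN _ E0d) E0d.2 E0_X0 E0_X1; ring. Qed.
Lemma E1_c1 : E1 c1 = - X0.
Proof. rewrite /c1 (derN _ E1d) E1d.2 E1_X0 E1_X1; ring. Qed.
Lemma E0_c2 : E0 c2 = X1 * X1.
Proof. rewrite /c2 !E0d.2 E0_X0 E0_X1; ring. Qed.
Lemma E1_c2 : E1 c2 = X0 * (X1 + X1).
Proof. rewrite /c2 !E1d.2 E1_X0 E1_X1; ring. Qed.

End S.

End Part1.
Import Part1.

Module Part2.
Section S.
Variable k : fieldType.
Local Notation S2 := {poly {poly k}}.
Local Notation S3 := {poly {poly {poly k}}}.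
Local Notation Phi := (Phi k).
Local Notation BrA := (@BrA k).
Local Notation BrB := (@BrB k).
Local Notation Y0 := (Y0 k).
Local Notation Y1 := (Y1 k).
Local Notation Y2 := (Y2 k).
Lemma poisson_fix P :
  Phi (BrA P Y0) = BrB (Phi P) (Phi Y0) ->
  Phi (BrA P Y1) = BrB (Phi P) (Phi Y1) ->
  Phi (BrA P Y2) = BrB (Phi P) (Phi Y2) ->
  forall Q, Phi (BrA P Q) = BrB (Phi P) (Phi Q).
Proof.
move=> h0 h1 h2; apply: S3_ind; [|  |  | exact: h0 | exact: h1 | exact: h2].
- move=> c; rewrite BrA_Cr PhiC BrB_Cr rmorph0. reflexivity.
- move=> Q1 Q2 e1 e2; rewrite BrA_addr rmorphD e1 e2 rmorphD BrB_addr. reflexivity.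
- move=> Q1 Q2 e1 e2; rewrite BrA_mulr rmorphD !rmorphM e1 e2 BrB_mulr. reflexivity.
Qed.


Lemma c1E : c1 k = - (X0 k * X1 k). Proof. by []. Qed.
Lemma c2E : c2 k = X0 k * (X1 k * X1 k). Proof. by []. Qed.
Local Opaque Part1.Y0 Part1.Y1 Part1.Y2 Part1.X0 Part1.X1 Part1.c1 Part1.c2 Part1.D0 Part1.D1 Part1.D2 Part1.E0 Part1.E1.
Local Notation D0 := (@D0 k).
Local Notation D1 := (@D1 k).
Local Notation D2 := (@D2 k).
Lemma Phi_BrA P Q : Phi (BrA P Q) =
  X0 k * (Phi (D0 P) * Phi (D1 Q) - Phi (D1 P) * Phi (D0 Q))
  + ((c1 k + c1 k) * (Phi (D0 P) * Phi (D2 Q) - Phi (D2 P) * Phi (D0 Q))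
  + c2 k * (Phi (D1 P) * Phi (D2 Q) - Phi (D2 P) * Phi (D1 Q))).
Proof. rewrite /BrA !rmorphD !rmorphM !rmorphB !rmorphD Phi0 Phi1 Phi2 !rmorphM. reflexivity. Qed.
Lemma Phi_0 : Phi 0 = 0. Proof. exact: rmorph0. Qed.
Lemma Phi_1 : Phi 1 = 1. Proof. exact: rmorph1. Qed.
Lemma PD00 : Phi (D0 Y0) = 1. Proof. rewrite (D0_Y0 k). exact: rmorph1. Qed.
Lemma PD01 : Phi (D0 Y1) = 0. Proof. rewrite (D0_Y1 k). exact: rmorph0. Qed.
Lemma PD02 : Phi (D0 Y2) = 0. Proof. rewrite (D0_Y2 k). exact: rmorph0. Qed.
Lemma PD10 : Phi (D1 Y0) = 0. Proof. rewrite (D1_Y0 k). exact: rmorph0. Qed.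
Lemma PD11 : Phi (D1 Y1) = 1. Proof. rewrite (D1_Y1 k). exact: rmorph1. Qed.
Lemma PD12 : Phi (D1 Y2) = 0. Proof. rewrite (D1_Y2 k). exact: rmorph0. Qed.
Lemma PD20 : Phi (D2 Y0) = 0. Proof. rewrite (D2_Y0 k). exact: rmorph0. Qed.
Lemma PD21 : Phi (D2 Y1) = 0. Proof. rewrite (D2_Y1 k). exact: rmorph0. Qed.
Lemma PD22 : Phi (D2 Y2) = 1. Proof. rewrite (D2_Y2 k). exact: rmorph1. Qed.

Lemma t00 : Phi (BrA Y0 Y0) = BrB (Phi Y0) (Phi Y0).
Proof. rewrite Phi_BrA PD00 PD10 PD20 (Phi0 k) /BrB (E0_X0 k) (E1_X0 k) c1E c2E. ring. Qed.
Lemma t01 : Phi (BrA Y0 Y1) = BrB (Phi Y0) (Phi Y1).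
Proof. rewrite Phi_BrA PD00 PD10 PD20 PD01 PD11 PD21 (Phi0 k) (Phi1 k) /BrB (E0_X0 k) (E1_X0 k) (E0_c1 k) (E1_c1 k) c1E c2E. ring. Qed.
Lemma t02 : Phi (BrA Y0 Y2) = BrB (Phi Y0) (Phi Y2).
Proof. rewrite Phi_BrA PD00 PD10 PD20 PD02 PD12 PD22 (Phi0 k) (Phi2 k) /BrB (E0_X0 k) (E1_X0 k) (E0_c2 k) (E1_c2 k) c1E c2E. ring. Qed.
Lemma t10 : Phi (BrA Y1 Y0) = BrB (Phi Y1) (Phi Y0).
Proof. rewrite Phi_BrA PD01 PD11 PD21 PD00 PD10 PD20 (Phi1 k) (Phi0 k) /BrB (E0_c1 k) (E1_c1 k) (E0_X0 k) (E1_X0 k) c1E c2E. ring. Qed.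
Lemma t11 : Phi (BrA Y1 Y1) = BrB (Phi Y1) (Phi Y1).
Proof. rewrite Phi_BrA PD01 PD11 PD21 (Phi1 k) /BrB (E0_c1 k) (E1_c1 k) c1E c2E. ring. Qed.
Lemma t12 : Phi (BrA Y1 Y2) = BrB (Phi Y1) (Phi Y2).
Proof. rewrite Phi_BrA PD01 PD11 PD21 PD02 PD12 PD22 (Phi1 k) (Phi2 k) /BrB (E0_c1 k) (E1_c1 k) (E0_c2 k) (E1_c2 k) c1E c2E. ring. Qed.
Lemma t20 : Phi (BrA Y2 Y0) = BrB (Phi Y2) (Phi Y0).
Proof. rewrite Phi_BrA PD02 PD12 PD22 PD00 PD10 PD20 (Phi2 k) (Phi0 k) /BrB (E0_c2 k) (E1_c2 k) (E0_X0 k) (E1_X0 k) c1E c2E. ring. Qed.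
Lemma t21 : Phi (BrA Y2 Y1) = BrB (Phi Y2) (Phi Y1).
Proof. rewrite Phi_BrA PD02 PD12 PD22 PD01 PD11 PD21 (Phi2 k) (Phi1 k) /BrB (E0_c2 k) (E1_c2 k) (E0_c1 k) (E1_c1 k) c1E c2E. ring. Qed.
Lemma t22 : Phi (BrA Y2 Y2) = BrB (Phi Y2) (Phi Y2).
Proof. rewrite Phi_BrA PD02 PD12 PD22 (Phi2 k) /BrB (E0_c2 k) (E1_c2 k) c1E c2E. ring. Qed.

Lemma poisson P Q : Phi (BrA P Q) = BrB (Phi P) (Phi Q).
Proof.
move: P Q; apply: S3_ind.
- move=> c Q; rewrite (@PhiC k) BrB_Cl BrA_Cl; exact: rmorph0.
- move=> P1 P2 e1 e2 Q; rewrite BrA_addl rmorphD e1 e2 rmorphD BrB_addl. reflexivity.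
- move=> P1 P2 e1 e2 Q; rewrite BrA_mull rmorphD !rmorphM e1 e2 BrB_mull. reflexivity.
- exact: poisson_fix t00 t01 t02.
- exact: poisson_fix t10 t11 t12.
- exact: poisson_fix t20 t21 t22.
Qed.
End S.

End Part2.
Import Part2.

Module Part3.
Section S.
Variable k : fieldType.
Local Notation S2 := {poly {poly k}}.
Local Notation S3 := {poly {poly {poly k}}}.
Local Notation Phi := (Phi k).
Local Notation BrA := (@BrA k).
Local Notation BrB := (@BrB k).

Definition cf3 (P : S3) : PS3 k := fun a b c => P`_a`_b`_c.
Definition cf2 (F : S2) : PS2 k := fun a b => F`_a`_b.

Lemma fext3 (f g : PS3 k) : (forall a b c, f a b c = g a b c) -> f = g.
Proof. move=> h; do 3 (apply: functional_extensionality => ?); exact: h. Qed.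
Lemma fext2 (f g : PS2 k) : (forall a b, f a b = g a b) -> f = g.
Proof. move=> h; do 2 (apply: functional_extensionality => ?); exact: h. Qed.

Lemma cf3_add P Q : cf3 (P + Q) = add3 (cf3 P) (cf3 Q).
Proof. apply: fext3 => a b c; rewrite /cf3 /add3 !coefD. reflexivity. Qed.
Lemma cf3_opp P : cf3 (- P) = opp3 (cf3 P).
Proof. apply: fext3 => a b c; rewrite /cf3 /opp3 !coefN. reflexivity. Qed.
Lemma cf3_mul P Q : cf3 (P * Q) = mul3 (cf3 P) (cf3 Q).
Proof.
apply: fext3 => a b c; rewrite /cf3 /mul3 coefM coef_sum coef_sum.
apply: eq_bigr => i _; rewrite coefM coef_sum; apply: eq_bigr => j _.
rewrite coefM. reflexivity.
Qed.
Lemma cf2_add F G : cf2 (F + G) = add2 (cf2 F) (cf2 G).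
Proof. apply: fext2 => a b; rewrite /cf2 /add2 !coefD. reflexivity. Qed.
Lemma cf2_opp F : cf2 (- F) = opp2 (cf2 F).
Proof. apply: fext2 => a b; rewrite /cf2 /opp2 !coefN. reflexivity. Qed.
Lemma cf2_mul F G : cf2 (F * G) = mul2 (cf2 F) (cf2 G).
Proof.
apply: fext2 => a b; rewrite /cf2 /mul2 coefM coef_sum.
apply: eq_bigr => i _; rewrite coefM. reflexivity.
Qed.

Lemma cf3_D0 P : cf3 (D0 P) = d3_0 (cf3 P).
Proof.
apply: fext3 => a b c; rewrite /cf3 /d3_0 /D0 coef_deriv !coefMn mulr_natl. reflexivity.
Qed.
Lemma cf3_D1 P : cf3 (D1 P) = d3_1 (cf3 P).
Proof.
apply: fext3 => a b c; rewrite /cf3 /d3_1 /D1 (coef_map_id0 _ _ (deriv0 _)) coef_deriv coefMn mulr_natl. reflexivity.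
Qed.
Lemma cf3_D2 P : cf3 (D2 P) = d3_2 (cf3 P).
Proof.
apply: fext3 => a b c; rewrite /cf3 /d3_2 /D2 (coef_map_id0 _ _ (md0 k)).
rewrite (coef_map_id0 _ _ (deriv0 _)) coef_deriv mulr_natl. reflexivity.
Qed.
Lemma cf2_E0 F : cf2 (E0 F) = d2_0 (cf2 F).
Proof. apply: fext2 => a b; rewrite /cf2 /d2_0 /E0 coef_deriv coefMn mulr_natl. reflexivity. Qed.
Lemma cf2_E1 F : cf2 (E1 F) = d2_1 (cf2 F).
Proof.
apply: fext2 => a b; rewrite /cf2 /d2_1 /E1 (coef_map_id0 _ _ (deriv0 _)) coef_deriv mulr_natl. reflexivity.
Qed.

Lemma PhiE P : Phi P = \sum_(i < size P) h1 k (P`_i) * X0 k ^+ i.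
Proof.
have -> : Phi P = (map_poly (h1 k) P).[X0 k] by [].
rewrite (@horner_coef_wide _ (size P)); last exact: size_poly.
apply: eq_bigr => i _; rewrite coef_map. reflexivity.
Qed.
Lemma h1E Q : h1 k Q = \sum_(j < size Q) h2 k (Q`_j) * c1 k ^+ j.
Proof.
have -> : h1 k Q = (map_poly (h2 k) Q).[c1 k] by [].
rewrite (@horner_coef_wide _ (size Q)); last exact: size_poly.
apply: eq_bigr => i _; rewrite coef_map. reflexivity.
Qed.
Lemma h2E R : h2 k R = \sum_(l < size R) (R`_l)%:P%:P * c2 k ^+ l.
Proof.
have -> : h2 k R = (map_poly (F2 k) R).[c2 k] by [].
rewrite (@horner_coef_wide _ (size R)); last exact: size_poly.
apply: eq_bigr => i _; rewrite coef_map. reflexivity.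
Qed.

Definition ord n (F : S2) := forall m, (m < n)%N -> F`_m = 0.
Lemma ord0 n : ord n 0. Proof. move=> m _; exact: coef0. Qed.
Lemma ord_sum n N (F : 'I_N -> S2) : (forall i, ord n (F i)) -> ord n (\sum_(i < N) F i).
Proof. move=> h m hm; rewrite coef_sum; apply: big1 => i _; exact: h. Qed.
Lemma ord_mulr n F G : ord n F -> ord n (F * G).
Proof.
move=> h m hm; rewrite coefM; apply: big1 => i _; rewrite h ?mul0r //.
have := ltn_ord i; rewrite ltnS => hi; exact: leq_ltn_trans hi hm.
Qed.
Lemma ord_mull n F G : ord n G -> ord n (F * G).
Proof. by move=> h; rewrite mulrC; apply: ord_mulr. Qed.
Lemma ord_le n m F : ord n F -> (m <= n)%N -> ord m F.
Proof. move=> h hmn i hi; apply: h; exact: leq_trans hi hmn. Qed.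
Lemma ord_X0n n G : ord n (X0 k ^+ n * G).
Proof. move=> m hm; rewrite coefXnM hm. reflexivity. Qed.
Lemma c1X j : c1 k ^+ j = X0 k ^+ j * (- X1 k) ^+ j.
Proof. rewrite -exprMn /c1 mulrN. reflexivity. Qed.
Lemma c2X j : c2 k ^+ j = X0 k ^+ j * (X1 k * X1 k) ^+ j.
Proof. rewrite -exprMn. reflexivity. Qed.

Lemma L2 a (R : {poly k}) : (forall l, (l <= a)%N -> R`_l = 0) -> ord a.+1 (h2 k R).
Proof.
move=> h; rewrite h2E; apply: ord_sum => l.
case: (leqP (nat_of_ord l) a) => hl.
  rewrite h // !polyC0 mul0r; exact: ord0.
apply: ord_mull; rewrite c2X; apply: ord_le hl; exact: ord_X0n. Qed.
Lemma L1 a (Q : {poly {poly k}}) : (forall j l, (j <= a)%N -> (l <= a)%N -> Q`_j`_l = 0) -> ord a.+1 (h1 k Q).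
Proof.
move=> h; rewrite h1E; apply: ord_sum => j.
case: (leqP (nat_of_ord j) a) => hj.
  apply: ord_mulr; apply: L2 => l hl; exact: h.
apply: ord_mull; rewrite c1X; apply: ord_le hj; exact: ord_X0n.
Qed.
Lemma L0 a (P : S3) : (forall i j l, (i <= a)%N -> (j <= a)%N -> (l <= a)%N -> P`_i`_j`_l = 0) ->
  ord a.+1 (Phi P).
Proof.
move=> h; rewrite PhiE; apply: ord_sum => i.
case: (leqP (nat_of_ord i) a) => hi.
  apply: ord_mulr; apply: L1 => j l hj hl; exact: h.
rewrite mulrC; apply: ord_le hi; exact: ord_X0n.
Qed.
Lemma Phi_B P Q : Phi (P - Q) = Phi P - Phi Q. Proof. exact: rmorphB. Qed.
Lemma Phi_D P Q : Phi (P + Q) = Phi P + Phi Q. Proof. exact: rmorphD. Qed.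
Lemma Phi_M P Q : Phi (P * Q) = Phi P * Phi Q. Proof. exact: rmorphM. Qed.
Lemma Phi_1 : Phi 1 = 1. Proof. exact: rmorph1. Qed.

Lemma LOC a (P Q : S3) : (forall i j l, (i <= a)%N -> (j <= a)%N -> (l <= a)%N -> P`_i`_j`_l = Q`_i`_j`_l) ->
  forall m, (m <= a)%N -> (Phi P)`_m = (Phi Q)`_m.
Proof.
move=> h m hm; apply/eqP; rewrite -subr_eq0 -coefB -Phi_B; apply/eqP.
apply: (L0 (a := a)) => //= i j l hi hj hl; rewrite !coefB h // subrr. reflexivity.
Qed.
Lemma cf3_Y0 : cf3 (Y0 k) = y0 k.
Proof.
apply: fext3 => a b c; rewrite /cf3 /y0 /mono3 /Y0 coefX.
case: (a == 1); rewrite ?mulr1n ?mulr0n ?coef1 ?coef0 /=; last reflexivity.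
case: (b == 0); rewrite ?mulr1n ?mulr0n ?coef1 ?coef0 /=; last reflexivity.
case: (c == 0); rewrite ?mulr1n ?mulr0n; reflexivity.
Qed.
Lemma cf3_Y1 : cf3 (Y1 k) = y1 k.
Proof.
apply: fext3 => a b c; rewrite /cf3 /y1 /mono3 /Y1 coefC.
case: (a == 0); rewrite ?coef0 /=; last reflexivity.
rewrite coefX; case: (b == 1); rewrite ?mulr1n ?mulr0n ?coef1 ?coef0 /=; last reflexivity.
case: (c == 0); rewrite ?mulr1n ?mulr0n; reflexivity.
Qed.
Lemma cf3_Y2 : cf3 (Y2 k) = y2 k.
Proof.
apply: fext3 => a b c; rewrite /cf3 /y2 /mono3 /Y2 coefC.
case: (a == 0); rewrite ?coef0 /=; last reflexivity.
rewrite coefC; case: (b == 0); rewrite ?coef0 /=; last reflexivity.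
rewrite coefX; case: (c == 1); rewrite ?mulr1n ?mulr0n; reflexivity.
Qed.
Lemma cf3_1 : cf3 1 = one3 k.
Proof.
apply: fext3 => a b c; rewrite /cf3 /one3 /mono3 coef1.
case: (a == 0); rewrite ?mulr1n ?mulr0n ?coef1 ?coef0 /=; last reflexivity.
case: (b == 0); rewrite ?mulr1n ?mulr0n ?coef1 ?coef0 /=; last reflexivity.
case: (c == 0); rewrite ?mulr1n ?mulr0n; reflexivity.
Qed.
Lemma cf2_X0 : cf2 (X0 k) = x0 k.
Proof.
apply: fext2 => a b; rewrite /cf2 /x0 /mono2 /X0 coefX.
case: (a == 1); rewrite ?mulr1n ?mulr0n ?coef1 ?coef0 /=; last reflexivity.
case: (b == 0); rewrite ?mulr1n ?mulr0n; reflexivity.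
Qed.
Lemma cf2_X1 : cf2 (X1 k) = x1 k.
Proof.
apply: fext2 => a b; rewrite /cf2 /x1 /mono2 /X1 coefC.
case: (a == 0); rewrite ?coef0 /=; last reflexivity.
rewrite coefX; case: (b == 1); rewrite ?mulr1n ?mulr0n; reflexivity.
Qed.
Lemma cf2_1 : cf2 1 = one2 k.
Proof.
apply: fext2 => a b; rewrite /cf2 /one2 /mono2 coef1.
case: (a == 0); rewrite ?mulr1n ?mulr0n ?coef1 ?coef0 /=; last reflexivity.
case: (b == 0); rewrite ?mulr1n ?mulr0n; reflexivity.
Qed.
Lemma cf2_0 : cf2 0 = (fun _ _ => 0).
Proof. apply: fext2 => a b; rewrite /cf2 !coef0. reflexivity. Qed.

Lemma cf3_BrA P Q : cf3 (BrA P Q) = bracketA (cf3 P) (cf3 Q).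
Proof.
rewrite /BrA !cf3_add !cf3_mul !cf3_add !cf3_opp !cf3_mul !cf3_D0 !cf3_D1 !cf3_D2 cf3_Y0 cf3_Y1 cf3_Y2.
reflexivity.
Qed.
Lemma cf2_BrB F G : cf2 (BrB F G) = bracketB (cf2 F) (cf2 G).
Proof.
rewrite /BrB !cf2_opp cf2_add cf2_opp !cf2_mul !cf2_E0 !cf2_E1. reflexivity.
Qed.
Definition ag3 n (f g : PS3 k) := forall i j l, (i <= n)%N -> (j <= n)%N -> (l <= n)%N -> f i j l = g i j l.
Definition ag2 n (f g : PS2 k) := forall p q, (p <= n)%N -> f p q = g p q.

Lemma ag3_refl n f : ag3 n f f. Proof. by []. Qed.
Lemma ag3_le n m f g : ag3 n f g -> (m <= n)%N -> ag3 m f g.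
Proof. move=> h hm i j l hi hj hl; apply: h; lia. Qed.
Lemma ag3_add n f g f' g' : ag3 n f f' -> ag3 n g g' -> ag3 n (add3 f g) (add3 f' g').
Proof. move=> hf hg i j l hi hj hl; rewrite /add3 hf ?hg //. Qed.
Lemma ag3_opp n f f' : ag3 n f f' -> ag3 n (opp3 f) (opp3 f').
Proof. move=> hf i j l hi hj hl; rewrite /opp3 hf //. Qed.
Lemma ag3_mul n f g f' g' : ag3 n f f' -> ag3 n g g' -> ag3 n (mul3 f g) (mul3 f' g').
Proof.
move=> hf hg i j l hi hj hl; rewrite /mul3.
apply: eq_bigr => i' _; apply: eq_bigr => j' _; apply: eq_bigr => l' _.
have := ltn_ord i'; have := ltn_ord j'; have := ltn_ord l' => h1 h2 h3.
rewrite hf ?hg //; lia.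
Qed.
Lemma ag3_d0 n f f' : ag3 n.+1 f f' -> ag3 n (d3_0 f) (d3_0 f').
Proof. move=> hf i j l hi hj hl; rewrite /d3_0 hf //; lia. Qed.
Lemma ag3_d1 n f f' : ag3 n.+1 f f' -> ag3 n (d3_1 f) (d3_1 f').
Proof. move=> hf i j l hi hj hl; rewrite /d3_1 hf //; lia. Qed.
Lemma ag3_d2 n f f' : ag3 n.+1 f f' -> ag3 n (d3_2 f) (d3_2 f').
Proof. move=> hf i j l hi hj hl; rewrite /d3_2 hf //; lia. Qed.
Lemma ag3_br n f g f' g' : ag3 n.+1 f f' -> ag3 n.+1 g g' ->
  ag3 n (bracketA f g) (bracketA f' g').
Proof.
move=> hf hg; rewrite /bracketA /jac3.
repeat first [ apply: ag3_add | apply: ag3_mul | apply: ag3_opp | apply: ag3_refl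
  | (apply: ag3_d0; assumption) | (apply: ag3_d1; assumption) | (apply: ag3_d2; assumption)].
Qed.

Lemma ag2_le n m f g : ag2 n f g -> (m <= n)%N -> ag2 m f g.
Proof. move=> h hm p q hp; apply: h; lia. Qed.
Lemma ag2_add n f g f' g' : ag2 n f f' -> ag2 n g g' -> ag2 n (add2 f g) (add2 f' g').
Proof. move=> hf hg p q hp; rewrite /add2 hf ?hg //. Qed.
Lemma ag2_opp n f f' : ag2 n f f' -> ag2 n (opp2 f) (opp2 f').
Proof. move=> hf p q hp; rewrite /opp2 hf //. Qed.
Lemma ag2_mul n f g f' g' : ag2 n f f' -> ag2 n g g' -> ag2 n (mul2 f g) (mul2 f' g').
Proof.
move=> hf hg p q hp; rewrite /mul2.
apply: eq_bigr => i' _; apply: eq_bigr => j' _.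
have := ltn_ord i' => h1.
rewrite hf ?hg //; lia.
Qed.
Lemma ag2_d0 n f f' : ag2 n.+1 f f' -> ag2 n (d2_0 f) (d2_0 f').
Proof. move=> hf p q hp; rewrite /d2_0 hf //. Qed.
Lemma ag2_d1 n f f' : ag2 n f f' -> ag2 n (d2_1 f) (d2_1 f').
Proof. move=> hf p q hp; rewrite /d2_1 hf //. Qed.
Lemma ag2_br n f g f' g' : ag2 n.+1 f f' -> ag2 n.+1 g g' ->
  ag2 n (bracketB f g) (bracketB f' g').
Proof.
move=> hf hg; rewrite /bracketB.
apply: ag2_opp; apply: ag2_add; [|apply: ag2_opp]; apply: ag2_mul;
  first [ (apply: ag2_d0; assumption) | (apply: ag2_d1; apply: ag2_le; [eassumption|lia])].
Qed.

Definition tr3 N (f : PS3 k) : S3 := \poly_(i < N) \poly_(j < N) \poly_(l < N) f i j l.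
Definition phi (f : PS3 k) : PS2 k := fun a b => (Phi (tr3 a.+1 f))`_a`_b.

Lemma tr3_ag n N f : (n < N)%N -> ag3 n (cf3 (tr3 N f)) f.
Proof.
move=> hN i j l hi hj hl; rewrite /cf3 /tr3 coef_poly.
have -> : (i < N)%N by lia. rewrite coef_poly. have -> : (j < N)%N by lia.
rewrite coef_poly. have -> : (l < N)%N by lia.
reflexivity.
Qed.

Lemma main_ag n P f : ag3 n (cf3 P) f -> ag2 n (cf2 (Phi P)) (phi f).
Proof.
move=> h p q hp; rewrite /phi /cf2.
rewrite (@LOC p P (tr3 p.+1 f)) //.
move=> i j l hi hj hl.
have := h i j l; rewrite /cf3 => ->; try lia.
have := tr3_ag (N := p.+1) f (leqnn p.+1) hi hj hl; rewrite /cf3 => ->. reflexivity.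
Qed.
Lemma phi_at a b P f : ag3 a (cf3 P) f -> phi f a b = cf2 (Phi P) a b.
Proof. by move=> h; rewrite (main_ag h). Qed.
Lemma phi_add f g : phi (add3 f g) = add2 (phi f) (phi g).
Proof.
apply: fext2 => a b.
have hP : ag3 a (cf3 (tr3 a.+1 f)) f := tr3_ag f (ltnSn a).
have hQ : ag3 a (cf3 (tr3 a.+1 g)) g := tr3_ag g (ltnSn a).
rewrite (@phi_at a b (tr3 a.+1 f + tr3 a.+1 g) (add3 f g)); last first.
  rewrite cf3_add; exact: ag3_add.
rewrite Phi_D cf2_add /add2 -(@phi_at a b _ _ hP) -(@phi_at a b _ _ hQ). reflexivity.
Qed.
Lemma phi_mul f g : phi (mul3 f g) = mul2 (phi f) (phi g).
Proof.
apply: fext2 => a b.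
have hP : ag3 a (cf3 (tr3 a.+1 f)) f := tr3_ag f (ltnSn a).
have hQ : ag3 a (cf3 (tr3 a.+1 g)) g := tr3_ag g (ltnSn a).
rewrite (@phi_at a b (tr3 a.+1 f * tr3 a.+1 g) (mul3 f g)); last first.
  rewrite cf3_mul; exact: ag3_mul.
rewrite Phi_M cf2_mul; exact: (ag2_mul (main_ag hP) (main_ag hQ) b (leqnn a)).
Qed.
Lemma phi_one : phi (one3 k) = one2 k.
Proof.
apply: fext2 => a b; rewrite (@phi_at a b 1 (one3 k)); last by rewrite cf3_1.
rewrite Phi_1 cf2_1. reflexivity.
Qed.
Lemma phi_y0 : phi (y0 k) = x0 k.
Proof.
apply: fext2 => a b; rewrite (@phi_at a b (Y0 k) (y0 k)); last by rewrite cf3_Y0.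
rewrite (Phi0 k) cf2_X0. reflexivity.
Qed.
Lemma phi_y1 : phi (y1 k) = opp2 (mul2 (x0 k) (x1 k)).
Proof.
apply: fext2 => a b; rewrite (@phi_at a b (Y1 k) (y1 k)); last by rewrite cf3_Y1.
rewrite (Phi1 k) /c1 cf2_opp cf2_mul cf2_X0 cf2_X1. reflexivity.
Qed.
Lemma phi_y2 : phi (y2 k) = mul2 (x0 k) (mul2 (x1 k) (x1 k)).
Proof.
apply: fext2 => a b; rewrite (@phi_at a b (Y2 k) (y2 k)); last by rewrite cf3_Y2.
rewrite (Phi2 k) /c2 !cf2_mul cf2_X0 cf2_X1. reflexivity.
Qed.
Lemma phi_rel : phi (relA k) = (fun _ _ => 0).
Proof.
apply: fext2 => a b.
rewrite (@phi_at a b (Y1 k * Y1 k - Y0 k * Y2 k) (relA k)); last first.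
  rewrite cf3_add cf3_opp !cf3_mul cf3_Y0 cf3_Y1 cf3_Y2; exact: ag3_refl.
rewrite Phi_B !Phi_M (Phi0 k) (Phi1 k) (Phi2 k).
have -> : c1 k * c1 k - X0 k * c2 k = 0 by rewrite /c1 /c2; ring.
rewrite cf2_0. reflexivity.
Qed.
Lemma phi_br f g : phi (bracketA f g) = bracketB (phi f) (phi g).
Proof.
apply: fext2 => a b.
have hP : ag3 a.+1 (cf3 (tr3 a.+2 f)) f := tr3_ag f (ltnSn a.+1).
have hQ : ag3 a.+1 (cf3 (tr3 a.+2 g)) g := tr3_ag g (ltnSn a.+1).
rewrite (@phi_at a b (BrA (tr3 a.+2 f) (tr3 a.+2 g)) (bracketA f g)); last first.
  rewrite cf3_BrA; exact: ag3_br.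
rewrite poisson cf2_BrB; exact: (ag2_br (main_ag hP) (main_ag hQ) b (leqnn a)).
Qed.
Lemma Phi_sum N (F : 'I_N -> S3) : Phi (\sum_(i < N) F i) = \sum_(i < N) Phi (F i).
Proof. exact: rmorph_sum. Qed.
Lemma Phi_Xn n : Phi ('X ^+ n) = X0 k ^+ n.
Proof. rewrite rmorphXn. congr (_ ^+ _). exact: (Phi0 k). Qed.

Lemma phi_iota h : phi (iotaA h) = iotaB h.
Proof.
apply: fext2 => a b.
rewrite (@phi_at a b (\poly_(i < a.+1) ((h i)%:P%:P : {poly {poly k}})) (iotaA h)); last first.
  move=> i j l hi hj hl; rewrite /cf3 /iotaA coef_poly.
  have -> : (i < a.+1)%N by lia.
  rewrite coefC; case: (j == 0); rewrite ?coef0 /=; last reflexivity.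
  rewrite coefC; case: (l == 0); reflexivity.
rewrite poly_def.
under eq_bigr => i _ do rewrite -mul_polyC.
rewrite Phi_sum.
under eq_bigr => i _ do rewrite Phi_M PhiCC h1C h2C Phi_Xn.
rewrite /cf2 coef_sum big_ord_recr /= big1; last first.
  move=> i _; rewrite /X0 coefMXn.
  have hi := ltn_ord i.
  case: ifP => _; first reflexivity.
  rewrite coefC; have -> : (a - i == 0)%N = false by apply/eqP; lia.
  reflexivity.
rewrite add0r /X0 coefMXn ltnn subnn coefC /= coefC /iotaB. reflexivity.
Qed.
Lemma mul2_x0x1 a b : mul2 (x0 k) (x1 k) a b = if (a == 1) && (b == 1) then 1 else 0.
Proof.
rewrite -cf2_X0 -cf2_X1 -cf2_mul /cf2 /X0 /X1 mulrC coefMX.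
case: a => [|a] /=; first by rewrite coef0.
rewrite coefC; case: a => [|a] /=; last by rewrite coef0.
rewrite coefX; case: (b == 1); reflexivity.
Qed.
Lemma mul2_x0x1x1 a b : mul2 (x0 k) (mul2 (x1 k) (x1 k)) a b = if (a == 1) && (b == 2) then 1 else 0.
Proof.
rewrite -cf2_X0 -cf2_X1 -!cf2_mul /cf2 /X0 /X1 mulrC coefMX -polyCM.
case: a => [|a] /=; first by rewrite coef0.
rewrite coefC; case: a => [|a] /=; last by rewrite coef0.
rewrite coefMX; case: b => [|b] /=; first reflexivity.
rewrite coefX -[(b.+1 == 2)%N]/(b == 1)%N; case: (b == 1); reflexivity.
Qed.

Lemma phi_good : good_phi phi.
Proof.
split.
- split.
  + exact: phi_add.
  + exact: phi_mul.
  + exact: phi_one.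
  + exact: phi_iota.
  + exact: phi_rel.
- split.
  + rewrite phi_y0 => a b hb; rewrite /x0 /mono2; case: (a == 1) => //=.
    by rewrite (negbTE hb).
  + rewrite phi_y1 => a b hb; rewrite /opp2 mul2_x0x1 (negbTE hb) andbF oppr0. reflexivity.
  + rewrite phi_y2 => a b hb; rewrite mul2_x0x1x1 (negbTE hb) andbF. reflexivity.
- exact: phi_br.
Qed.
Lemma y0_iota : y0 k = iotaA (fun i => if i == 1 then 1 else 0).
Proof.
apply: fext3 => a b c; rewrite /y0 /mono3 /iotaA.
case: (a == 1); case: (b == 0); case: (c == 0); reflexivity.
Qed.
Lemma x0_iota : x0 k = iotaB (fun i => if i == 1 then 1 else 0).
Proof.
apply: fext2 => a b; rewrite /x0 /mono2 /iotaB.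
case: (a == 1); case: (b == 0); reflexivity.
Qed.
Lemma cf3_C c : cf3 c%:P%:P%:P = iotaA (fun i => if i == 0 then c else 0).
Proof.
apply: fext3 => a b l; rewrite /cf3 /iotaA coefC.
case: (a == 0); rewrite /= ?coef0; last by case: (b == 0); case: (l == 0).
rewrite coefC; case: (b == 0); rewrite /= ?coef0; last by case: (l == 0).
rewrite coefC; case: (l == 0); reflexivity.
Qed.
Lemma cf2_C c : cf2 c%:P%:P = iotaB (fun i => if i == 0 then c else 0).
Proof.
apply: fext2 => a b; rewrite /cf2 /iotaB coefC.
case: (a == 0); rewrite /= ?coef0; last by case: (b == 0).
rewrite coefC; case: (b == 0); reflexivity.
Qed.

Lemma BrA01 : BrA (Y0 k) (Y1 k) = Y0 k.
Proof.
rewrite /BrA (D0_Y0 k) (D0_Y1 k) (D1_Y0 k) (D1_Y1 k) (D2_Y0 k) (D2_Y1 k). ring.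
Qed.
Lemma BrA02 : BrA (Y0 k) (Y2 k) = Y1 k + Y1 k.
Proof.
rewrite /BrA (D0_Y0 k) (D0_Y2 k) (D1_Y0 k) (D1_Y2 k) (D2_Y0 k) (D2_Y2 k). ring.
Qed.
Lemma br01 : bracketA (y0 k) (y1 k) = y0 k.
Proof. by rewrite -cf3_Y0 -cf3_Y1 -cf3_BrA BrA01. Qed.
Lemma br02 : bracketA (y0 k) (y2 k) = add3 (y1 k) (y1 k).
Proof. by rewrite -cf3_Y0 -cf3_Y1 -cf3_Y2 -cf3_BrA BrA02 cf3_add. Qed.

Lemma mul2_1 (g : PS2 k) : mul2 (one2 k) g = g.
Proof.
apply: fext2 => a b; rewrite /mul2 big_ord_recl big_ord_recl /= big1; last first.
  move=> j _; rewrite /one2 /mono2 /=. exact: mul0r.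
rewrite big1; last first.
  move=> i _; apply: big1 => j _; rewrite /one2 /mono2 /=. exact: mul0r.
rewrite /one2 /mono2 /= !subn0 mul1r !addr0. reflexivity.
Qed.
Lemma mul2_0 (g : PS2 k) : mul2 (fun _ _ => (0 : k)) g = (fun _ _ => (0 : k)).
Proof.
apply: fext2 => a b; rewrite /mul2; apply: big1 => i _; apply: big1 => j _; exact: mul0r.
Qed.
Lemma d2_0x0 : d2_0 (x0 k) = one2 k.
Proof.
apply: fext2 => a b; rewrite /d2_0 /x0 /one2 /mono2 eqSS.
case: a => [|a] /=; last by rewrite mulr0.
exact: mul1r. Qed.
Lemma d2_1x0 : d2_1 (x0 k) = (fun _ _ => (0 : k)).
Proof. apply: fext2 => a b; rewrite /d2_1 /x0 /mono2 andbF mulr0. reflexivity. Qed.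
Lemma brx0 u a b : bracketB (x0 k) u a b = - ((b.+1)%:R * u a b.+1).
Proof.
rewrite /bracketB d2_0x0 d2_1x0 mul2_1 mul2_0 /opp2 /add2 oppr0 addr0. reflexivity.
Qed.

Lemma cf3_Y0n n : cf3 (Y0 k ^+ n) = mono3 k n 0 0.
Proof.
apply: fext3 => a b c; rewrite /cf3 /mono3 /Y0 coefXn.
case: (a == n); rewrite ?mulr1n ?mulr0n ?coef1 ?coef0 /=; last reflexivity.
case: (b == 0); rewrite ?mulr1n ?mulr0n ?coef1 ?coef0 /=; last reflexivity.
case: (c == 0); rewrite ?mulr1n ?mulr0n; reflexivity.
Qed.
Lemma cf3_Y1n n : cf3 (Y1 k ^+ n) = mono3 k 0 n 0.
Proof.
have -> : Y1 k ^+ n = ('X ^+ n)%:P by rewrite /Y1 rmorphXn.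
apply: fext3 => a b c; rewrite /cf3 /mono3 coefC.
case: (a == 0); rewrite ?coef0 /=; last reflexivity.
rewrite coefXn; case: (b == n); rewrite ?mulr1n ?mulr0n ?coef1 ?coef0 /=; last reflexivity.
case: (c == 0); rewrite ?mulr1n ?mulr0n; reflexivity.
Qed.
Lemma cf3_Y2n n : cf3 (Y2 k ^+ n) = mono3 k 0 0 n.
Proof.
have -> : Y2 k ^+ n = ('X ^+ n)%:P%:P by rewrite /Y2 !rmorphXn.
apply: fext3 => a b c; rewrite /cf3 /mono3 coefC.
case: (a == 0); rewrite ?coef0 /=; last reflexivity.
rewrite coefC; case: (b == 0); rewrite ?coef0 /=; last reflexivity.
rewrite coefXn; case: (c == n); rewrite ?mulr1n ?mulr0n; reflexivity.
Qed.

Lemma sum_if (B : bool) n (F : 'I_n -> k) :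
  \sum_(l < n) (if B then F l else 0) = if B then \sum_(l < n) F l else 0.
Proof. case: B => //; exact: big1. Qed.
Lemma sum_delta n p (F : nat -> k) :
  \sum_(i < n) (if (i : nat) == p then F i else 0) = if (p < n)%N then F p else 0.
Proof.
case: ltnP => hp.
  rewrite (bigD1 (Ordinal hp)) //= eqxx big1 ?addr0 // => i hi.
  case: eqP => // e; exfalso; move: hi; apply/negP; rewrite negbK; apply/eqP.
  exact: val_inj.
apply: big1 => i _; case: eqP => // e; exfalso.
have := ltn_ord i; rewrite e; lia.
Qed.
Lemma mono_term (i j l p q r : nat) (x : k) :
  (if [&& i == p, j == q & l == r] then 1 else 0) * x =
  if i == p then (if j == q then (if l == r then x else 0) else 0) else 0.
Proof. case: (i == p); case: (j == q); case: (l == r); rewrite /= ?mul1r ?mul0r; reflexivity. Qed.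

Lemma mul3_mono p q r (g : PS3 k) a b c :
  mul3 (mono3 k p q r) g a b c =
  if [&& p <= a, q <= b & r <= c]%N then g (a - p)%N (b - q)%N (c - r)%N else 0.
Proof.
rewrite /mul3 /mono3.
under eq_bigr => i _ do (under eq_bigr => j _ do
  (under eq_bigr => l _ do rewrite mono_term; rewrite sum_if sum_if
     (sum_delta _ _ (fun l => g (a - i)%N (b - j)%N (c - l)%N)));
  rewrite sum_if (sum_delta _ _ (fun j => if (r < c.+1)%N then g (a - i)%N (b - j)%N (c - r)%N else 0))).
rewrite (sum_delta _ _ (fun i => if (q < b.+1)%N then (if (r < c.+1)%N then g (a - i)%N (b - q)%N (c - r)%N else 0) else 0)) !ltnS.
case: (p <= a)%N; case: (q <= b)%N; case: (r <= c)%N; reflexivity.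
Qed.
Lemma decomp a (R : PS3 k) :
  (forall i j l, (i <= a)%N -> (j <= a)%N -> (l <= a)%N -> R i j l = 0) ->
  R = add3 (mul3 (mono3 k a.+1 0 0) (fun i j l => R (i + a.+1)%N j l))
      (add3 (mul3 (mono3 k 0 a.+1 0) (fun i j l => if (i <= a)%N then R i (j + a.+1)%N l else 0))
            (mul3 (mono3 k 0 0 a.+1) (fun i j l => if (i <= a)%N && (j <= a)%N then R i j (l + a.+1)%N else 0))).
Proof.
move=> hR; apply: fext3 => i j l; rewrite /add3 !mul3_mono !leq0n !subn0 /=.
case: (leqP i a) => hi; case: (leqP j a) => hj; case: (leqP l a) => hl;
  rewrite /= ?subnK // ?addr0 ?add0r //; exact: hR.
Qed.
Lemma mul2_ord a b F (g : PS2 k) : ord a.+1 F -> mul2 (cf2 F) g a b = 0.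
Proof.
move=> h; rewrite /mul2; apply: big1 => i _; apply: big1 => j _.
rewrite /cf2 h ?coef0 ?mul0r //; exact: ltn_ord.
Qed.
Lemma Phi_X0n n : Phi (Y0 k ^+ n) = X0 k ^+ n.
Proof. rewrite rmorphXn. congr (_ ^+ _). exact: (Phi0 k). Qed.
Lemma Phi_Y1n n : Phi (Y1 k ^+ n) = c1 k ^+ n.
Proof. rewrite rmorphXn. congr (_ ^+ _). exact: (Phi1 k). Qed.
Lemma Phi_Y2n n : Phi (Y2 k ^+ n) = c2 k ^+ n.
Proof. rewrite rmorphXn. congr (_ ^+ _). exact: (Phi2 k). Qed.
Section Uniq.
Variable psi : PS3 k -> PS2 k.
Hypothesis hchar : [pchar k] =i pred0.
Hypothesis hg : good_phi psi.

Lemma psi_add f g : psi (add3 f g) = add2 (psi f) (psi g).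
Proof. by case: hg => [[]]. Qed.
Lemma psi_mul f g : psi (mul3 f g) = mul2 (psi f) (psi g).
Proof. by case: hg => [[]]. Qed.
Lemma psi_iota h : psi (iotaA h) = iotaB h.
Proof. by case: hg => [[]]. Qed.
Lemma psi_pois f g : psi (bracketA f g) = bracketB (psi f) (psi g).
Proof. by case: hg. Qed.
Lemma psi_hom1 : homogB 1 (psi (y1 k)). Proof. by case: hg => _ []. Qed.
Lemma psi_hom2 : homogB 2 (psi (y2 k)). Proof. by case: hg => _ []. Qed.

Lemma psi_y0 : psi (y0 k) = x0 k.
Proof. by rewrite y0_iota psi_iota -x0_iota. Qed.

Lemma psi_y1 : psi (y1 k) = opp2 (mul2 (x0 k) (x1 k)).
Proof.
have e := psi_pois (y0 k) (y1 k); rewrite br01 psi_y0 in e.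
apply: fext2 => a b; rewrite /opp2 mul2_x0x1.
case: (eqVneq b 1) => [-> | hb].
  have := congr1 (fun F => F a 0%N) e; rewrite brx0 /x0 /mono2 /= mul1r => ->.
  rewrite opprK. reflexivity.
rewrite psi_hom1 // andbF oppr0. reflexivity.
Qed.

Lemma two_neq0 : (2%:R : k) != 0.
Proof. by move/pcharf0P: hchar => ->. Qed.

Lemma psi_y2 : psi (y2 k) = mul2 (x0 k) (mul2 (x1 k) (x1 k)).
Proof.
have e := psi_pois (y0 k) (y2 k); rewrite br02 psi_add psi_y1 psi_y0 in e.
apply: fext2 => a b; rewrite mul2_x0x1x1.
case: (eqVneq b 2) => [-> | hb].
  have := congr1 (fun F => F a 1%N) e; rewrite brx0 /add2 /opp2 mul2_x0x1 eqxx andbT => e2.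
  apply: (mulfI two_neq0).
  have -> : (2%:R : k) * psi (y2 k) a 2 = - (- (if a == 1 then 1 else 0) + - (if a == 1 then 1 else 0)) by rewrite e2 opprK.
  case: (a == 1); ring.
rewrite psi_hom2 // andbF. reflexivity.
Qed.

Lemma psi_cf3 P : psi (cf3 P) = cf2 (Phi P).
Proof.
move: P; apply: S3_ind.
- move=> c; rewrite cf3_C psi_iota (@PhiC k) cf2_C. reflexivity.
- move=> P Q e1 e2; rewrite cf3_add psi_add e1 e2 Phi_D cf2_add. reflexivity.
- move=> P Q e1 e2; rewrite cf3_mul psi_mul e1 e2 Phi_M cf2_mul. reflexivity.
- rewrite cf3_Y0 psi_y0 (Phi0 k) cf2_X0. reflexivity.
- rewrite cf3_Y1 psi_y1 (Phi1 k) /c1 cf2_opp cf2_mul cf2_X0 cf2_X1. reflexivity.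
- rewrite cf3_Y2 psi_y2 (Phi2 k) /c2 !cf2_mul cf2_X0 cf2_X1. reflexivity.
Qed.
Lemma psi_phi f : psi f = phi f.
Proof.
apply: fext2 => a b.
set T := cf3 (tr3 a.+1 f).
set R := fun i j l => f i j l - T i j l.
have hf : f = add3 T R by apply: fext3 => i j l; rewrite /add3 /R addrC subrK.
have hR : forall i j l, (i <= a)%N -> (j <= a)%N -> (l <= a)%N -> R i j l = 0.
  move=> i j l hi hj hl; rewrite /R /T (tr3_ag f (ltnSn a) hi hj hl) subrr. reflexivity.
rewrite {1}hf psi_add /add2 /T psi_cf3 (decomp hR) !psi_add /add2 !psi_mul.
rewrite -cf3_Y0n -cf3_Y1n -cf3_Y2n !psi_cf3 Phi_X0n Phi_Y1n Phi_Y2n.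
rewrite (@mul2_ord a b (X0 k ^+ a.+1)); last by rewrite -[X0 k ^+ a.+1]mulr1; exact: ord_X0n.
rewrite (@mul2_ord a b (c1 k ^+ a.+1)); last by rewrite c1X; exact: ord_X0n.
rewrite (@mul2_ord a b (c2 k ^+ a.+1)); last by rewrite c2X; exact: ord_X0n.
rewrite !addr0. reflexivity.
Qed.
End Uniq.
End S.


End Part3.
Import Part3.

Theorem theorem3 (k : fieldType) (hchar : [pchar k] =i pred0) :
  exists phi : PS3 k -> PS2 k,
    [/\ good_phi phi,
        phi (y0 k) = x0 k,
        phi (y1 k) = opp2 (mul2 (x0 k) (x1 k)),
        phi (y2 k) = mul2 (x0 k) (mul2 (x1 k) (x1 k))
      & forall psi : PS3 k -> PS2 k, good_phi psi -> psi = phi].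
Proof.
exists (@phi k); split.
- exact: phi_good.
- exact: phi_y0.
- exact: phi_y1.
- exact: phi_y2.
- move=> psi hpsi; apply: functional_extensionality => f; exact: (psi_phi hchar hpsi f).
Qed.
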